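(* Let $P\subset\mathbb R^d$ be a rational $d$-polytope, $\bm a\in N(P)$, and $F$ the facet of $P$ with inner normal vector $\bm a$. Let $k\in\mathbb Z$ and let $\bm v\in H_{\bm a,k}$ be generic in $\mathcal A_P$, i.e. $\bm v\notin H$ for every $H\in\mathcal A_P$ with $H\neq H_{\bm a,k}$. Then for every sufficiently small $\varepsilon>0$: (1) $\mathrm{TL}_{P,\bm v}(t)-\mathrm{TL}_{P,\bm v+\varepsilon\bm a}(t)=\mathrm{TL}_{F,\bm v}(t)$ for all $t\in\mathbb Z_{\ge0}$, and $\mathrm{TL}_{F,\bm v}$ is not identically zero; (2) if there is no real $c>0$ with $-c\bm a\in N(P)$, then $\mathrm{TL}_{P,\bm v}(t)=\mathrm{TL}_{P,\bm v-\varepsilon\bm a}(t)$ for all $t\in\mathbb Z_{\ge0}$.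
   Context: $P=\bigcap_{i=1}^m\{\bm x:(\bm a_i,\bm x)\ge b_i\}$ is the unique irredundant presentation with $(\bm a_i,b_i)\in\mathbb Z^{d+1}$ primitive; $N(P)=\{\bm a_1,\dots,\bm a_m\}$, and the facet with normal $\bm a_i$ is $P\cap\{(\bm a_i,\bm x)=b_i\}$. $H_{\bm a,k}=\{\bm x:(\bm a,\bm x)=k\}$, $\mathcal A_P=\{H_{\bm a_i,k}:i\le m,k\in\mathbb Z\}$. $\mathrm{TL}_{X,\bm v}(t)=\#((tX+\bm v)\cap\mathbb Z^d)$. *)

(* Defs.v *)
From HB Require Import structures.
From mathcomp Require Import all_boot all_order all_algebra.
From mathcomp Require Import finmap.
From mathcomp Require Import all_classical all_reals all_analysis.
Set Implicit Arguments. Unset Strict Implicit. Unset Printing Implicit Defensive.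
Import Order.TTheory GRing.Theory Num.Theory.
Import numFieldNormedType.Exports.
Local Open Scope ring_scope.
Local Open Scope classical_set_scope.

Definition dotR (R : numDomainType) (d : nat) (a x : 'rV[R]_d) : R :=
  \sum_(i < d) a 0 i * x 0 i.

Definition intv (R : numDomainType) (d : nat) (z : 'rV[int]_d) : 'rV[R]_d :=
  map_mx (fun n : int => n%:~R) z.
Arguments intv R {d} z.

Definition hyperplane (R : numDomainType) (d : nat) (a : 'rV[int]_d) (k : int)
  : set 'rV[R]_d := [set x | dotR (intv R a) x = k%:~R].
Arguments hyperplane R {d} a k.

Definition polyhedron (R : numDomainType) (d m : nat) (A : 'I_m -> 'rV[int]_d)
  (b : 'I_m -> int) : set 'rV[R]_d :=
  [set x | forall i, (b i)%:~R <= dotR (intv R (A i)) x].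
Arguments polyhedron R {d m} A b.

Definition primitive (d : nat) (a : 'rV[int]_d) (b : int) : Prop :=
  forall c : int, (c %| b)%Z -> (forall i, (c %| a ord0 i)%Z) -> `|c| = 1.

Definition irredundant (R : numDomainType) (d m : nat) (A : 'I_m -> 'rV[int]_d)
  (b : 'I_m -> int) : Prop :=
  forall i0 : 'I_m,
    [set x : 'rV[R]_d | forall i, i != i0 -> (b i)%:~R <= dotR (intv R (A i)) x]
    <> polyhedron R A b.
Arguments irredundant R {d m} A b.

Definition TL (R : numDomainType) (d : nat) (X : set 'rV[R]_d) (v : 'rV[R]_d)
  (t : nat) : nat :=
  #|` fset_set [set z : 'rV[int]_d | exists2 x, X x & intv R z = t%:R *: x + v] |.

(* Main.v *)
Require Import Defs.
From HB Require Import structures.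
From mathcomp Require Import all_boot all_order all_algebra.
From mathcomp Require Import finmap.
From mathcomp Require Import all_classical all_reals all_analysis.
From mathcomp Require Import ring lra zify.
Import Order.TTheory GRing.Theory Num.Theory.
Import numFieldNormedType.Exports.
Local Open Scope ring_scope.
Local Open Scope classical_set_scope.

Section Basic.
Variable R : realType.

Lemma dotR_D d (a x y : 'rV[R]_d) : dotR a (x + y) = dotR a x + dotR a y.
Proof. by rewrite /dotR -big_split; apply: eq_bigr => i _; rewrite mxE mulrDr. Qed.
Lemma dotR_Z d (a x : 'rV[R]_d) c : dotR a (c *: x) = c * dotR a x.
Proof. by rewrite /dotR mulr_sumr; apply: eq_bigr => i _; rewrite mxE mulrCA. Qed.
Lemma dotR_N d (a x : 'rV[R]_d) : dotR a (- x) = - dotR a x.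
Proof. by rewrite -scaleN1r dotR_Z mulN1r. Qed.
Lemma dotR_B d (a x y : 'rV[R]_d) : dotR a (x - y) = dotR a x - dotR a y.
Proof. by rewrite dotR_D dotR_N. Qed.
Lemma dotR_intv d (a z : 'rV[int]_d) :
  dotR (intv R a) (intv R z) = (\sum_i a 0 i * z 0 i)%:~R.
Proof. by rewrite /dotR rmorph_sum; apply: eq_bigr => i _; rewrite !mxE rmorphM. Qed.

Lemma int_between (f : int) (y : R) (N : int) :
  f%:~R < y -> y < (f+1)%:~R -> ((y <= N%:~R) = (f < N)) /\ y != N%:~R.
Proof.
move=> h1 h2; split.
  case: (ltrP f N) => hN.
    apply/idP; apply: (le_trans (ltW h2)); rewrite ler_int; by rewrite lezD1.
  apply/negbTE; rewrite -ltNge; apply: le_lt_trans h1; by rewrite ler_int.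
apply/negP => /eqP Hy; subst y.
move: h1 h2; rewrite !ltr_int => h1 h2.
by move: h2; rewrite ltzD1 leNgt h1.
Qed.


Lemma floor_stable (x : R) : (forall n : int, x != n%:~R) ->
  exists2 e : R, 0 < e & forall del, `|del| < e ->
   (forall N : int, (x + del <= N%:~R) = (x <= N%:~R)) /\
   (forall n : int, x + del != n%:~R).
Proof.
move=> Hx; set f := Num.floor x.
have hf : f%:~R < x by rewrite lt_neqAle floor_le andbT eq_sym Hx.
have hf1 : x < (f+1)%:~R := floorD1_gt x.
exists (Num.min (x - f%:~R) ((f+1)%:~R - x)); first by rewrite lt_min !subr_gt0 hf hf1.
move=> del; rewrite lt_min => /andP[h1 h2].
move: (ler_norm del) (ler_normr del) => hd1 hd2.
have hd3 : - del <= `|del| by rewrite -normrN ler_norm.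
have l1 : f%:~R < x + del by lra.
have l2 : x + del < (f+1)%:~R by lra.
split=> N.
  by rewrite (int_between _ _ N l1 l2).1 (int_between _ _ N hf hf1).1.
exact: (int_between _ _ N l1 l2).2.
Qed.

Lemma int_addsmall (k N : int) (e : R) : 0 < e -> e < 1 ->
  (k%:~R + e <= N%:~R) = (k < N).
Proof.
move=> he1 he2; apply: (int_between k _ N _ _).1; first by lra.
by rewrite intrD; lra.
Qed.

Lemma int_subsmall (k N : int) (e : R) : 0 < e -> e < 1 ->
  (k%:~R - e <= N%:~R) = (k <= N).
Proof.
move=> he1 he2; have := (@int_between (k - 1) (k%:~R - e) N).
rewrite subrK intrB => H; case: H; [by lra|by lra|] => -> _.
by apply/idP/idP; lia.
Qed.

End Basic.

Lemma dotR_delta (R : realType) d (a : 'rV[R]_d) p : dotR a (delta_mx 0 p) = a 0 p.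
Proof.
rewrite /dotR (bigD1 p) //= big1 ?addr0; first by rewrite mxE !eqxx mulr1.
by move=> i hi; rewrite mxE (negbTE hi) andbF mulr0.
Qed.

Lemma dotR_self_gt0 (R : realType) d (u : 'rV[R]_d) p : u 0 p != 0 -> 0 < dotR u u.
Proof.
move=> hp; rewrite /dotR (bigD1 p) //=.
apply: (@lt_le_trans _ _ (u 0 p * u 0 p)); first by rewrite -expr2 lt_neqAle sqr_ge0 andbT eq_sym sqrf_eq0.
rewrite lerDl sumr_ge0 // => i _; rewrite -expr2; exact: sqr_ge0.
Qed.

Lemma par_hyper (R : realType) d (al al' v : 'rV[R]_d) (kk nn : R) p :
  al 0 p != 0 ->
  [set x | dotR al' x = nn] = [set x | dotR al x = kk] -> dotR al v = kk ->
  exists2 c, c != 0 & forall x, dotR al' x = c * dotR al x.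
Proof.
move=> hp E hv.
have Hin : forall x, dotR al' x = nn <-> dotR al x = kk.
  by move=> x; rewrite -[dotR al' x = nn]/([set x | dotR al' x = nn] x) E.
have hv' : dotR al' v = nn by apply/Hin.
have Hw : forall w, dotR al w = 0 -> dotR al' w = 0.
  move=> w hw; have : dotR al' (v + w) = nn by apply/Hin; rewrite dotR_D hw addr0.
  by rewrite dotR_D hv' => h; apply: (addrI nn); rewrite h addr0.
have Hpar : forall x, dotR al' x = al' 0 p / al 0 p * dotR al x.
  move=> x; set w := x - (dotR al x / al 0 p) *: delta_mx 0 p.
  have : dotR al w = 0 by rewrite /w dotR_B dotR_Z dotR_delta mulfVK // subrr.
  move/Hw; rewrite /w dotR_B dotR_Z dotR_delta => /eqP; rewrite subr_eq0 => /eqP ->.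
  by rewrite mulrAC [RHS]mulrC mulrA.
exists (al' 0 p / al 0 p) => //.
apply/negP => /eqP hc.
have H0 : forall x, dotR al' x = 0 by move=> x; rewrite Hpar hc mul0r.
have hn : nn = 0 by rewrite -hv' H0.
have : dotR al (v + delta_mx 0 p) = kk by apply/Hin; rewrite H0 hn.
rewrite dotR_D hv dotR_delta => h.
have h' : al 0 p = 0 by apply: (addrI kk); rewrite h addr0.
by move: hp; rewrite h' eqxx.
Qed.

Section Poly.
Variables (R : realType) (d m : nat) (A : 'I_m -> 'rV[int]_d) (b : 'I_m -> int).
Hypothesis Hprim : forall i, primitive (A i) (b i).
Hypothesis Hirr : irredundant R A b.
Hypothesis Hbdd : bounded_set (polyhedron R A b).
Hypothesis Hfull : (polyhedron R A b)° !=set0.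
Variables (i0 : 'I_m) (k : int) (v : 'rV[R]_d).
Hypothesis Hv : hyperplane R (A i0) k v.
Hypothesis Hgen : forall (j : 'I_m) (k' : int),
      hyperplane R (A j) k' <> hyperplane R (A i0) k -> ~ hyperplane R (A j) k' v.

Definition lr j (x : 'rV[R]_d) := dotR (intv R (A j)) x.
Definition lz j (z : 'rV[int]_d) : int := \sum_i A j 0 i * z 0 i.
Let a := intv R (A i0).

Lemma lrD j x y : lr j (x + y) = lr j x + lr j y. Proof. exact: dotR_D. Qed.
Lemma lrB j x y : lr j (x - y) = lr j x - lr j y. Proof. exact: dotR_B. Qed.
Lemma lrZ j c x : lr j (c *: x) = c * lr j x. Proof. exact: dotR_Z. Qed.
Lemma lr_intv j z : lr j (intv R z) = (lz j z)%:~R. Proof. exact: dotR_intv. Qed.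
Lemma lzD j z1 z2 : lz j (z1 + z2) = lz j z1 + lz j z2.
Proof. by rewrite /lz -big_split; apply: eq_bigr => i _; rewrite mxE mulrDr. Qed.
Lemma lzZ j c z : lz j (c *: z) = c * lz j z.
Proof. by rewrite /lz mulr_sumr; apply: eq_bigr => i _; rewrite mxE mulrCA. Qed.
Lemma lzN j z : lz j (- z) = - lz j z.
Proof. by rewrite -scaleN1r lzZ mulN1r. Qed.
Lemma lzB j z1 z2 : lz j (z1 - z2) = lz j z1 - lz j z2.
Proof. by rewrite lzD lzN. Qed.
Lemma lz_delta j p : lz j (delta_mx 0 p) = A j 0 p.
Proof.
rewrite /lz (bigD1 p) //= big1 ?addr0; first by rewrite mxE !eqxx mulr1.
by move=> i hi; rewrite mxE (negbTE hi) andbF mulr0.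
Qed.
Lemma intv_entry (z : 'rV[int]_d) i : intv R z 0 i = (z 0 i)%:~R.
Proof. by rewrite mxE. Qed.

Lemma Pne : exists x, polyhedron R A b x.
Proof. case: Hfull => x /interior_subset Hx; by exists x. Qed.

Lemma NZ j : exists p, A j 0 p != 0.
Proof.
apply: contrapT => H.
have H0 : forall p, A j 0 p = 0.
  move=> p; apply/eqP; apply/negPn/negP => Hp; apply: H; by exists p.
have Hl : forall x, lr j x = 0.
  move=> x; rewrite /lr /dotR big1 // => i _; by rewrite mxE H0 mul0r.
have [x0 Hx0] := Pne.
have hb : (b j)%:~R <= 0 :> R by rewrite -(Hl x0); exact: Hx0.
apply: (Hirr j); apply/seteqP; split => x /= Hx.
  move=> i; case: (eqVneq i j) => [->|hij]; last exact: Hx.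
  by have := Hl x; rewrite /lr => ->.
by move=> i _; exact: Hx.
Qed.

Lemma no_pos_par j1 j2 c : j1 != j2 -> 0 < c -> (forall x, lr j1 x = c * lr j2 x) -> False.
Proof.
move=> hne hc hpar.
case: (lerP (b j1)%:~R (c * (b j2)%:~R)) => hb.
- apply: (Hirr j1); apply/seteqP; split => x /= Hx; last by move=> i _; exact: Hx.
  move=> i; case: (eqVneq i j1) => [->|hij]; last exact: Hx.
  have h2 : (b j2)%:~R <= lr j2 x by apply: Hx; rewrite eq_sym.
  rewrite -/(lr j1 x) hpar; apply: le_trans hb _; by rewrite ler_pM2l.
- apply: (Hirr j2); apply/seteqP; split => x /= Hx; last by move=> i _; exact: Hx.
  move=> i; case: (eqVneq i j2) => [->|hij]; last exact: Hx.
  have h1 : (b j1)%:~R <= lr j1 x by apply: Hx.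
  rewrite hpar in h1; rewrite -/(lr j2 x).
  have : c * (b j2)%:~R < c * lr j2 x by apply: lt_le_trans hb h1.
  by rewrite ltr_pM2l // => /ltW.
Qed.

Lemma a_ne0 : exists2 p, A i0 0 p != 0 & a 0 p != 0.
Proof. have [p hp] := NZ i0; exists p => //; by rewrite /a mxE intr_eq0. Qed.

Lemma classify j : (forall n : int, lr j v != n%:~R) \/ j = i0 \/
   ((exists n : int, lr j v = n%:~R) /\ exists2 c, c < 0 & forall x, lr j x = c * lr i0 x).
Proof.
case: (pselect (exists n : int, lr j v = n%:~R)) => [[n hn]|hn]; last first.
  left => n; apply/eqP => h; apply: hn; by exists n.
right.
have Heq : hyperplane R (A j) n = hyperplane R (A i0) k.
  apply: contrapT => hneq; exact: (Hgen j n hneq hn).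
have [p _ hp] := a_ne0.
have [c hc0 hc] := @par_hyper R d _ _ v _ _ p hp Heq Hv.
case: (eqVneq j i0) => [->|hji]; [by left|right].
split; first by exists n.
exists c => //; rewrite lt_neqAle hc0 /= leNgt; apply/negP => hcpos.
exact: (@no_pos_par j i0 c hji hcpos hc).
Qed.

Lemma interior_strict : exists p0, forall j, (b j)%:~R < lr j p0.
Proof.
case: Hfull => p0 Hp0; exists p0 => j.
have : nbhs p0 (polyhedron R A b) := Hp0.
move/nbhs_ballP => [e /= he Hball].
rewrite ltNge; apply/negP => hle.
set u := intv R (A j).
have [p hp] := NZ j.
have hup : u 0 p != 0 by rewrite /u mxE intr_eq0.
have hu : 0 < dotR u u := @dotR_self_gt0 R d u p hup.
have hun : 0 < `|u|.
  rewrite normr_gt0; apply/negP => /eqP hu0; move: hup; by rewrite hu0 mxE eqxx.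
set del := e / (2 * `|u|).
have hdel : 0 < del by rewrite divr_gt0 // mulr_gt0.
have Hy : polyhedron R A b (p0 - del *: u).
  apply: Hball; rewrite -ball_normE /ball_ /= opprB addrC subrK normrZ gtr0_norm //.
  have -> : del * `|u| = e / 2.
    rewrite /del; field; by rewrite gt_eqF.
  lra.
have := Hy j; rewrite -/(lr j _) lrB lrZ => h.
have : del * dotR u u > 0 by rewrite mulr_gt0.
rewrite /lr in h hle; rewrite -/u in h hle.
lra.
Qed.

Lemma facet_point : exists q, lr i0 q = (b i0)%:~R /\ forall j, j != i0 -> (b j)%:~R < lr j q.
Proof.
have [p0 Hp0] := interior_strict.
have [y [Hy1 Hy2]] : exists y, (forall j, j != i0 -> (b j)%:~R <= lr j y) /\ lr i0 y < (b i0)%:~R.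
  apply: contrapT => H; apply: (Hirr i0); apply/seteqP; split => x /= Hx;
    last by move=> i _; apply: Hx.
  move=> i; case: (eqVneq i i0) => [->|hi]; last exact: Hx i hi.
  rewrite leNgt; apply/negP => hlt; apply: H; by exists x.
set lp := lr i0 p0; set ly := lr i0 y.
have h1 : (b i0)%:~R < lp := Hp0 i0.
have Hy2' : ly < (b i0)%:~R := Hy2.
have hd : 0 < lp - ly by lra.
set lam := (lp - (b i0)%:~R) / (lp - ly).
have hl0 : 0 < lam by rewrite divr_gt0 // subr_gt0.
have hl1 : lam < 1 by rewrite ltr_pdivrMr // mul1r; lra.
exists (p0 + lam *: (y - p0)); split.
  rewrite lrD lrZ lrB -/lp -/ly /lam.
  have hd' : lp - ly != 0 by rewrite gt_eqF.
  by field.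
move=> j hj; rewrite lrD lrZ lrB.
have := Hp0 j; have := Hy1 j hj => h2 h3.
nra.
Qed.

Lemma ideal_gen : exists2 g : int, 0 < g &
  (exists zg, lz i0 zg = g) /\ forall z, (g %| lz i0 z)%Z.
Proof.
have [p hp _] := a_ne0.
have ex : exists n : nat, (0 < n)%N && `[< exists z, lz i0 z = n%:Z >].
  exists (absz (A i0 0 p)); apply/andP; split; first by rewrite absz_gt0.
  apply/asboolP; exists ((sgz (A i0 0 p)) *: delta_mx 0 p).
  by rewrite lzZ lz_delta abszEsg.
case: (ex_minnP ex) => g /andP[gpos /asboolP [zg hzg]] gmin.
exists g%:Z; first by rewrite ltz_nat.
split; first by exists zg.
move=> z; set x := lz i0 z.
have hg0 : g%:Z != 0 by rewrite eqz_nat -lt0n.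
have hx := divz_eq x g%:Z.
set q := (x %/ g%:Z)%Z in hx *; set r := (x %% g%:Z)%Z in hx *.
have r0 : 0 <= r := modz_ge0 x hg0.
have rlt : r < g%:Z by apply: ltz_pmod; rewrite ltz_nat.
have rin : lz i0 (z - q *: zg) = r.
  by rewrite lzB lzZ hzg -/x hx addrAC subrr add0r.
case: (eqVneq r 0) => [hr|hr]; first by apply/dvdz_mod0P.
exfalso.
have : (g <= `|r|)%N.
  apply: gmin; apply/andP; split; first by rewrite absz_gt0.
  apply/asboolP; exists (z - q *: zg); by rewrite rin gez0_abs.
move: rlt; rewrite -(gez0_abs r0) ltz_nat; lia.
Qed.

Lemma exists_t (T : nat) : exists t : nat, (T < t)%N /\ exists z0, lz i0 z0 = b i0 * t%:Z + k.
Proof.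
have [g gpos [[zg hzg] gdvd]] := ideal_gen.
set c := gcdz g (b i0).
have hc : `|c| = 1.
  apply: (Hprim i0); first exact: dvdz_gcdr.
  move=> i; apply: (dvdz_trans (dvdz_gcdl g (b i0))); rewrite -lz_delta; exact: gdvd.
have hc1 : c = 1 by rewrite -hc ger0_norm.
have [u [w huw]] := Bezoutz g (b i0).
rewrite -/c hc1 in huw.
set s : int := T%:Z + 1 + `|k * w|.
set t : int := s * g - k * w.
have hs : 0 <= s by rewrite /s; have := normr_ge0 (k * w); lia.
have sg : s <= s * g by rewrite ler_peMr // ; lia.
have ht : T%:Z < t by rewrite /t; have := ler_norm (k * w); lia.
exists `|t|%N; split.
  by rewrite -ltz_nat gez0_abs //; lia.
exists ((s * b i0 + k * u) *: zg).
rewrite lzZ hzg gez0_abs; last by lia.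
apply/eqP; rewrite -subr_eq0.
have -> : (s * b i0 + k * u) * g - (b i0 * t + k) = k * (u * g + w * b i0 - 1) by rewrite /t; ring.
by rewrite huw subrr mulr0.
Qed.

Lemma lattice_approx : exists2 B : R, 0 <= B & forall (n : int) (y : 'rV[R]_d),
   lr i0 y = n%:~R -> (exists z0, lz i0 z0 = n) ->
   exists z, lz i0 z = n /\ forall i, `|(intv R z - y) 0 i| <= B.
Proof.
have [p hp hap] := a_ne0.
set ap := A i0 0 p.
have apE : a 0 p = ap%:~R by rewrite /a mxE.
set apR : R := ap%:~R.
have hapR : apR != 0 by rewrite /apR -apE.
exists (`|apR| + \sum_i `|a 0 i|).
  by rewrite addr_ge0 // sumr_ge0.
move=> n y hy [z0 hz0].
pose f : 'rV[int]_d :=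
  \row_i (if i == p then 0 else Num.floor ((y 0 i - (z0 0 i)%:~R) / apR)).
set z := z0 + ap *: f - (lz i0 f) *: delta_mx 0 p.
have hz : lz i0 z = n.
  by rewrite /z lzB lzD !lzZ lz_delta hz0 -/ap [ap * _]mulrC addrK.
exists z; split => //.
set D := intv R z - y.
have Dne : forall i, i != p -> `|D 0 i| <= `|apR|.
  move=> i hi; rewrite /D /z !mxE (negbTE hi) andbF mulr0 subr0 /=.
  set ph := (y 0 i - (z0 0 i)%:~R) / apR.
  have hfl := floor_itv ph.
  have -> : ((z0 0 i + ap * Num.floor ph)%:~R - y 0 i) =
            apR * ((Num.floor ph)%:~R - ph).
    rewrite /ph intrD intrM -/apR; field; exact: hapR.
  rewrite normrM ler_piMr // ler_norml; move: hfl; rewrite intrD; lra.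
have hsum : lr i0 D = 0.
  by rewrite /D lrB lr_intv hz hy subrr.
rewrite /lr /dotR (bigD1 p) //= -/a apE in hsum.
have e1 : `|apR| * `|D 0 p| = `|\sum_(i < d | i != p) a 0 i * D 0 i|.
  rewrite -normrM; have -> : apR * D 0 p = - \sum_(i < d | i != p) a 0 i * D 0 i by lra.
  by rewrite normrN.
have e2 : `|\sum_(i < d | i != p) a 0 i * D 0 i| <= `|apR| * \sum_(i < d | i != p) `|a 0 i|.
  apply: (le_trans (ler_norm_sum _ _ _)); rewrite mulr_sumr; apply: ler_sum => i hi.
  rewrite normrM mulrC; apply: ler_wpM2r => //; exact: Dne.
have hDp : `|D 0 p| <= \sum_(i < d | i != p) `|a 0 i|.
  by rewrite -(@ler_pM2l _ `|apR|) ?normr_gt0 // e1.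
have hs : \sum_(i < d | i != p) `|a 0 i| <= \sum_i `|a 0 i|.
  by rewrite [X in _ <= X](bigD1 p) //= lerDr.
move=> i; case: (eqVneq i p) => [->|hi].
  apply: (le_trans hDp); apply: (le_trans hs); by rewrite lerDr.
apply: (le_trans (Dne i hi)); by rewrite lerDl sumr_ge0.
Qed.

Definition memS (X : set 'rV[R]_d) (w : 'rV[R]_d) (t : nat) (z : 'rV[int]_d) :=
  exists2 x, X x & intv R z = t%:R *: x + w.

Lemma memS_pos X w t z : (0 < t)%N -> memS X w t z <-> X (t%:R^-1 *: (intv R z - w)).
Proof.
move=> ht; have htR : t%:R != 0 :> R by rewrite pnatr_eq0 -lt0n.
split.
  by move=> [x Hx hz]; rewrite hz addrK scalerA mulVf // scale1r.
move=> Hx; exists (t%:R^-1 *: (intv R z - w)) => //.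
by rewrite scalerA mulfV // scale1r subrK.
Qed.

Lemma memS_0 X w z : (exists x, X x) -> (memS X w 0 z <-> intv R z = w).
Proof.
move=> [x0 Hx0]; split; first by move=> [x _ ->]; rewrite mulr0n scale0r add0r.
by move=> hz; exists x0 => //; rewrite hz mulr0n scale0r add0r.
Qed.

Lemma intr_nat_eq (t : nat) : (t%:Z)%:~R = t%:R :> R.
Proof. by []. Qed.

Lemma lr_scaled j t (z : 'rV[int]_d) w (bj : int) : (0 < t)%N ->
  ((bj%:~R <= lr j (t%:R^-1 *: (intv R z - w))) <->
   (lr j w <= (lz j z - bj * t%:Z)%:~R)).
Proof.
move=> ht; have htR : 0 < t%:R :> R by rewrite ltr0n.
rewrite lrZ lrB lr_intv ler_pdivlMl // intrB intrM intr_nat_eq; split => h; lra.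
Qed.

Lemma lr_scaled_eq j t (z : 'rV[int]_d) w (bj : int) : (0 < t)%N ->
  ((lr j (t%:R^-1 *: (intv R z - w)) = bj%:~R) <->
   (lr j w = (lz j z - bj * t%:Z)%:~R)).
Proof.
move=> ht; have htR : 0 < t%:R :> R by rewrite ltr0n.
rewrite lrZ lrB lr_intv intrB intrM intr_nat_eq; split => h.
  have : t%:R * (t%:R^-1 * ((lz j z)%:~R - lr j w)) = t%:R * bj%:~R by rewrite h.
  rewrite mulrA mulfV ?gt_eqF // mul1r; lra.
rewrite h; field; by rewrite gt_eqF.
Qed.

Lemma inP_pos w t z : (0 < t)%N ->
  (memS (polyhedron R A b) w t z <-> forall j, lr j w <= (lz j z - b j * t%:Z)%:~R).
Proof.
move=> ht; rewrite memS_pos //; split => h j; first by apply/(lr_scaled j t z w (b j) ht); apply: h.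
by apply/(lr_scaled j t z w (b j) ht); apply: h.
Qed.

Definition Fset := polyhedron R A b `&` hyperplane R (A i0) (b i0).

Lemma inF_pos w t z : (0 < t)%N ->
  (memS Fset w t z <-> (forall j, lr j w <= (lz j z - b j * t%:Z)%:~R) /\
                        lr i0 w = (lz i0 z - b i0 * t%:Z)%:~R).
Proof.
move=> ht; rewrite memS_pos //; split.
  move=> [h1 h2]; split; first by move=> j; apply/(lr_scaled j t z w (b j) ht); apply: h1.
  by apply/(lr_scaled_eq i0 t z w (b i0) ht); apply: h2.
move=> [h1 h2]; split; first by move=> j; apply/(lr_scaled j t z w (b j) ht); apply: h1.
by apply/(lr_scaled_eq i0 t z w (b i0) ht).
Qed.

Lemma bounded_P : exists M : R, forall x, polyhedron R A b x -> `|x| <= M.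
Proof. move: Hbdd => [M [_ HM]]. exists (M+1) => x Ax. by apply: (HM (M+1)) => //; rewrite ltrDl. Qed.

Lemma entry_le (x : 'rV[R]_d) i : `|x 0 i| <= `|x|.
Proof. rewrite [X in _ <= X]/Num.norm /= mx_normrE. apply: (le_bigmax _ _ (0, i)). Qed.

Lemma box_fin (N : nat) : finite_set [set z : 'rV[int]_d | forall i, (absz (z 0%R i) <= N)%N].
Proof.
pose g (f : {ffun 'I_d -> 'I_(N.*2.+1)}) : 'rV[int]_d := \row_i ((f i : nat)%:Z - N%:Z).
apply: (@sub_finite_set _ _ (g @` setT)); last exact: finite_image finite_finset.
move=> z /= hz.
exists [ffun i => inord (absz (z 0%R i + N%:Z)%R)] => //.
apply/rowP => i; rewrite mxE ffunE inordK; have := hz i.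
  move=> h; rewrite gez0_abs; lia.
move=> h; lia.
Qed.

Lemma memS_fin X w t : X `<=` polyhedron R A b -> finite_set [set z | memS X w t z].
Proof.
move=> hX; have [M HM] := bounded_P.
have [x0 Hx0] := Pne.
have hM : 0 <= M by apply: le_trans (HM x0 Hx0).
set N := Num.bound (t%:R * M + `|w|).
apply: (sub_finite_set _ (box_fin N)) => z [x Hx hz] i.
have h : `|(z 0 i)%:~R| <= t%:R * M + `|w| :> R.
  have -> : (z 0 i)%:~R = (t%:R *: x + w) 0 i by rewrite -hz mxE.
  rewrite !mxE; apply: (le_trans (ler_normD _ _)); apply: lerD; last exact: entry_le.
  rewrite normrM ger0_norm // ler_wpM2l //; exact: le_trans (entry_le x i) (HM x (hX x Hx)).
have hb : t%:R * M + `|w| < N%:R by apply: archi_boundP; rewrite addr_ge0 // mulr_ge0.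
have : ((absz (z 0 i))%:R < N%:R :> R) by rewrite natr_absz intr_norm; apply: le_lt_trans h hb.
by rewrite ltr_nat => /ltnW.
Qed.

Lemma Hv' : lr i0 v = k%:~R. Proof. exact: Hv. Qed.

Lemma F_lattice : exists t : nat, exists z, memS Fset v t z.
Proof.
have [q [hq1 hq2]] := facet_point.
have [B hB0 HB] := lattice_approx.
pose K j : R := \sum_i `|(intv R (A j)) 0 i|.
have HK : forall j (D : 'rV[R]_d), (forall i, `|D 0 i| <= B) -> `|lr j D| <= K j * B.
  move=> j D hD; rewrite /lr /dotR /K mulr_suml; apply: (le_trans (ler_norm_sum _ _ _)).
  apply: ler_sum => i _; rewrite normrM; exact: ler_wpM2l.
have HK0 : forall j, 0 <= K j by move=> j; rewrite sumr_ge0.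
pose T j : nat := if j == i0 then 0%N
   else Num.bound (K j * B / (lr j q - (b j)%:~R)).
have [t [ht [z0 hz0]]] := exists_t (\max_j T j).
have tpos : (0 < t)%N by apply: leq_ltn_trans ht.
set y := t%:R *: q + v.
have hy : lr i0 y = (lz i0 z0)%:~R.
  by rewrite /y lrD lrZ hq1 hz0 Hv' intrD intrM intr_nat_eq mulrC.
have [z [hz hD]] := HB _ y hy (ex_intro _ z0 erefl).
exists t, z; apply/inF_pos => //.
have Hi0 : lr i0 v = (lz i0 z - b i0 * t%:Z)%:~R.
  by rewrite hz hz0 addrAC subrr add0r Hv'.
split => //.
move=> j; case: (eqVneq j i0) => [->|hj]; first by rewrite Hi0.
have hg : 0 < lr j q - (b j)%:~R by rewrite subr_gt0 hq2.
have hTj : (T j <= t)%N by apply: leq_trans (leq_bigmax j) (ltnW ht).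
have hTj' : K j * B / (lr j q - (b j)%:~R) < (T j)%:R.
  rewrite /T (negbTE hj); apply: archi_boundP.
  by rewrite divr_ge0 // ?mulr_ge0 // ltW.
have hKB : K j * B < t%:R * (lr j q - (b j)%:~R).
  rewrite -ltr_pdivrMr //; apply: lt_le_trans hTj' _; by rewrite ler_nat.
have hDj := HK j _ hD.
have hsplit : (lz j z)%:~R = lr j (intv R z - y) + t%:R * lr j q + lr j v.
  by rewrite lrB -lr_intv /y lrD lrZ; ring.
rewrite intrB intrM intr_nat_eq hsplit.
move: hDj; rewrite ler_norml => /andP[hl _].
nra.
Qed.

Lemma combine (I : eqType) (Q : I -> R -> Prop) (s : seq I) :
  (forall j, j \in s -> exists2 e : R, 0 < e & forall eps, 0 < eps < e -> Q j eps) ->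
  exists2 e : R, 0 < e & forall eps, 0 < eps < e -> forall j, j \in s -> Q j eps.
Proof.
elim: s => [|x s IH] H.
  by exists 1 => // eps _ j; rewrite in_nil.
have [e1 he1 H1] := H x (mem_head _ _).
have [e2 he2 H2] : exists2 e : R, 0 < e & forall eps, 0 < eps < e -> forall j, j \in s -> Q j eps.
  apply: IH => j hj; apply: H; by rewrite in_cons hj orbT.
exists (Num.min e1 e2); first by rewrite lt_min he1 he2.
move=> eps /andP[h0]; rewrite lt_min => /andP[h1 h2] j; rewrite in_cons => /orP[/eqP->|hj].
  apply: H1; by rewrite h0 h1.
apply: H2 => //; by rewrite h0 h2.
Qed.

Definition Good j (eps : R) := `|eps * lr j a| < 1 /\
  ((forall n : int, lr j v != n%:~R) ->
    forall N : int, (lr j v + eps * lr j a <= N%:~R) = (lr j v <= N%:~R) /\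
                    (lr j v - eps * lr j a <= N%:~R) = (lr j v <= N%:~R)).

Lemma small_prod (eps l c : R) : 0 < c -> 0 < eps -> eps < c / (`|l| + 1) -> `|eps * l| < c.
Proof.
move=> hc h0 h1; have hL : 0 < `|l| + 1 by have := normr_ge0 l; lra.
rewrite normrM gtr0_norm //.
rewrite ltr_pdivlMr // in h1.
have : eps * `|l| <= eps * (`|l| + 1) by rewrite ler_wpM2l ?ltW //; lra.
lra.
Qed.

Arguments floor_stable {R x}.
Arguments int_subsmall {R} k N {e}.
Arguments int_addsmall {R} k N {e}.
Arguments small_prod {eps l c}.

Lemma good_ex j : exists2 e : R, 0 < e & forall eps, 0 < eps < e -> Good j eps.
Proof.
have hL : 0 < `|lr j a| + 1 by have := normr_ge0 (lr j a); lra.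
case: (pselect (forall n : int, lr j v != n%:~R)) => Hg.
- have [e1 he1 H1] := floor_stable Hg.
  have hm : 0 < Num.min e1 1 by rewrite lt_min he1 ltr01.
  exists (Num.min e1 1 / (`|lr j a| + 1)); first by rewrite divr_gt0.
  move=> eps /andP[h0 h1].
  have := small_prod hm h0 h1; rewrite lt_min => /andP[hb1 hb2].
  split => // _ N; split; first exact: (H1 _ hb1).1 N.
  have hb1' : `|- (eps * lr j a)| < e1 by rewrite normrN.
  exact: (H1 _ hb1').1 N.
- exists (1 / (`|lr j a| + 1)); first by rewrite divr_gt0.
  move=> eps /andP[h0 h1]; split; first exact: small_prod.
  by move=> H; exfalso; apply: Hg.
Qed.

Lemma T0_ex : exists2 e : R, 0 < e & forall eps, 0 < eps < e ->
  forall s : R, (s = 1 \/ s = -1) -> ~ exists z, intv R z = v + (s * eps) *: a.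
Proof.
have apE : forall p, a 0 p = (A i0 0 p)%:~R by move=> p; rewrite /a mxE.
have hs1 : forall s : R, (s = 1 \/ s = -1) -> `|s| = 1.
  by move=> s [->|->]; rewrite ?normrN normr1.
case: (pselect (forall p, exists n : int, v 0 p = n%:~R)) => Hint.
- have [p hp hap] := a_ne0.
  have hpa : 0 < `|a 0 p| by rewrite normr_gt0.
  exists (1 / (`|a 0 p| + 1)); first by rewrite divr_gt0 //; lra.
  move=> eps /andP[h0 h1] s hs [z hz].
  have := small_prod ltr01 h0 h1 => hsm.
  have := congr1 (fun M : 'rV[R]_d => M 0 p) hz; rewrite !mxE -apE.
  have [n hn] := Hint p; rewrite hn => he.
  have hm : ((z 0 p - n)%:~R : R) = s * eps * a 0 p by rewrite intrB he; ring.
  have hm1 : `|((z 0 p - n)%:~R : R)| < 1.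
    by rewrite hm -mulrA normrM hs1 // mul1r.
  have hm0 : 0 < `|((z 0 p - n)%:~R : R)|.
    by rewrite hm -mulrA normrM hs1 // mul1r normrM gtr0_norm // mulr_gt0.
  rewrite -intr_norm in hm1 hm0.
  rewrite ltr0z in hm0; rewrite ltrz1 in hm1.
  lia.
- have [p hp] : exists p, forall n : int, v 0 p != n%:~R.
    apply: contrapT => H; apply: Hint => p; apply: contrapT => H'; apply: H; exists p.
    by move=> n; apply/eqP => hn; apply: H'; exists n.
  have [e1 he1 H1] := floor_stable hp.
  exists (e1 / (`|a 0 p| + 1)); first by rewrite divr_gt0 //; have := normr_ge0 (a 0 p); lra.
  move=> eps /andP[h0 h1] s hs [z hz].
  have hsm := small_prod he1 h0 h1.
  have hd : `|s * eps * a 0 p| < e1 by rewrite -mulrA normrM hs1 // mul1r.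
  have := (H1 _ hd).2 (z 0 p).
  have := congr1 (fun M : 'rV[R]_d => M 0 p) hz; rewrite !mxE -apE => <-.
  by rewrite eqxx.
Qed.

Lemma laa_gt0 : 0 < lr i0 a.
Proof. have [p _ hap] := a_ne0; exact: (@dotR_self_gt0 R d a p hap). Qed.

Lemma par_vec j c : (forall x, lr j x = c * lr i0 x) -> intv R (A j) = c *: a.
Proof.
move=> hpar; apply/rowP => i; rewrite [RHS]mxE.
by have := hpar (delta_mx 0 i); rewrite /lr !dotR_delta.
Qed.

Lemma per_plus j eps (N : int) : Good j eps -> 0 < eps -> j != i0 ->
  (lr j v + eps * lr j a <= N%:~R) = (lr j v <= N%:~R).
Proof.
move=> [hg1 hg2] he hj; case: (classify j) => [Hg|[hji|[[n hn] [c hc hpar]]]].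
- exact: (hg2 Hg N).1.
- by rewrite hji eqxx in hj.
- rewrite hn ler_int.
  have hl : lr j a = c * lr i0 a := hpar a.
  have hL := laa_gt0.
  have hneg : 0 < - (eps * lr j a) by rewrite hl -mulrN -mulNr mulr_gt0 // mulr_gt0 // oppr_gt0.
  move: hg1; rewrite ltr_norml => /andP[h1 h2].
  rewrite -(int_subsmall n N hneg); last by lra.
  by rewrite opprK.
Qed.

Lemma per_plus_i0 eps (N : int) : Good i0 eps -> 0 < eps ->
  (lr i0 v + eps * lr i0 a <= N%:~R) = (k < N).
Proof.
move=> [hg1 _] he; rewrite Hv'.
have hL := laa_gt0.
have hpos : 0 < eps * lr i0 a by rewrite mulr_gt0.
move: hg1; rewrite ltr_norml => /andP[h1 h2].
exact: int_addsmall.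
Qed.

Lemma per_minus j eps (N : int) : Good j eps -> 0 < eps ->
  (~ exists (j : 'I_m) (c : R), 0 < c /\ intv R (A j) = - (c *: a)) ->
  (lr j v - eps * lr j a <= N%:~R) = (lr j v <= N%:~R).
Proof.
move=> [hg1 hg2] he Hno; case: (classify j) => [Hg|[hji|[[n hn] [c hc hpar]]]].
- exact: (hg2 Hg N).2.
- rewrite hji Hv' ler_int.
  have hL := laa_gt0.
  have hpos : 0 < eps * lr i0 a by rewrite mulr_gt0.
  move: hg1; rewrite hji ltr_norml => /andP[h1 h2].
  exact: int_subsmall.
- exfalso; apply: Hno; exists j, (- c); split; first by rewrite oppr_gt0.
  by rewrite (@par_vec j c hpar) scaleNr opprK.
Qed.

Lemma Fne : exists x, Fset x.
Proof.
have [q [hq1 hq2]] := facet_point.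
exists q; split; last exact: hq1.
move=> j; case: (eqVneq j i0) => [->|hj]; first by rewrite -/(lr i0 q) hq1.
exact: ltW (hq2 j hj).
Qed.

Lemma part1_z t z eps : 0 < eps -> (forall j, Good j eps) ->
  (forall s : R, (s = 1 \/ s = -1) -> ~ exists z, intv R z = v + (s * eps) *: a) ->
  (memS (polyhedron R A b) v t z <->
     memS (polyhedron R A b) (v + eps *: a) t z \/ memS Fset v t z) /\
  ~ (memS (polyhedron R A b) (v + eps *: a) t z /\ memS Fset v t z).
Proof.
move=> he hg hT.
case: t => [|t].
  rewrite !memS_0 //; try exact: Pne; try exact: Fne.
  have hn : intv R z <> v + eps *: a.
    by move=> h; apply: (hT 1); [left|exists z; rewrite mul1r].
  by split; [split => [h|[h|h]] //; right | move=> [h _]].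
have ht : (0 < t.+1)%N by [].
rewrite !inP_pos // inF_pos //.
have HQ : (forall j, lr j (v + eps *: a) <= (lz j z - b j * t.+1%:Z)%:~R) <->
  (forall j, j != i0 -> lr j v <= (lz j z - b j * t.+1%:Z)%:~R) /\
    k < lz i0 z - b i0 * t.+1%:Z.
  split.
    move=> h; split.
      move=> j hj; rewrite -(per_plus _ _ _ (hg j) he hj); have := h j; by rewrite lrD lrZ.
    by have := h i0; rewrite lrD lrZ (per_plus_i0 _ _ (hg i0) he).
  move=> [h1 h2] j; rewrite lrD lrZ; case: (eqVneq j i0) => [->|hj].
    by rewrite (per_plus_i0 _ _ (hg i0) he).
  by rewrite (per_plus _ _ _ (hg j) he hj); apply: h1.
rewrite HQ Hv'.
split; [split|].
- move=> h; have := h i0; rewrite Hv' ler_int le_eqVlt => /orP[/eqP e|lt].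
    by right; split => //; rewrite e.
  by left; split => // j _; apply: h.
- case => [[h1 h2]|[h1 h2]] j; last exact: h1 j.
  case: (eqVneq j i0) => [->|hj]; last exact: h1 j hj.
  by rewrite Hv' ler_int ltW.
- move=> [[_ h2] [_ h3]]; move: h3 => /eqP; rewrite eqr_int => /eqP h3.
  by rewrite h3 ltxx in h2.
Qed.

Lemma part2_z t z eps : 0 < eps -> (forall j, Good j eps) ->
  (forall s : R, (s = 1 \/ s = -1) -> ~ exists z, intv R z = v + (s * eps) *: a) ->
  (~ exists (j : 'I_m) (c : R), 0 < c /\ intv R (A j) = - (c *: a)) ->
  (~ exists z, intv R z = v) ->
  (memS (polyhedron R A b) v t z <-> memS (polyhedron R A b) (v - eps *: a) t z).
Proof.
move=> he hg hT Hno Hvi.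
case: t => [|t].
  rewrite !memS_0; try exact: Pne.
  split => h; exfalso; first by apply: Hvi; exists z.
  by apply: (hT (-1)); [right|exists z; rewrite h mulN1r scaleNr].
have ht : (0 < t.+1)%N by [].
rewrite !inP_pos //; split => h j; have := h j; by rewrite lrB lrZ (per_minus _ _ _ (hg j) he Hno).
Qed.

Lemma v_not_int : (~ exists (j : 'I_m) (c : R), 0 < c /\ intv R (A j) = - (c *: a)) ->
  ~ exists z, intv R z = v.
Proof.
move=> Hno [z hz].
have all_i0 : forall j, j = i0.
  move=> j; case: (classify j) => [Hg|[->//|[_ [c hc hpar]]]].
    by exfalso; have := Hg (lz j z); rewrite -hz lr_intv eqxx.
  exfalso; apply: Hno; exists j, (- c); split; first by rewrite oppr_gt0.
  by rewrite (@par_vec j c hpar) scaleNr opprK.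
have [M HM] := bounded_P.
have [p0 Hp0] := interior_strict.
have [p hp hap] := a_ne0.
have hL := laa_gt0.
have hP : forall s, 0 <= s -> polyhedron R A b (p0 + s *: a).
  move=> s hs j; rewrite (all_i0 j) -/(lr i0 _) lrD lrZ.
  have := Hp0 i0; nra.
have hap1 : 1 <= `|a 0 p|.
  by rewrite /a mxE -intr_norm ler1z -abszE lez_nat absz_gt0.
have hp0P : polyhedron R A b p0 by move=> j; exact: ltW (Hp0 j).
have hM : `|p0 0 p| <= M := le_trans (entry_le p0 p) (HM p0 hp0P).
set s := M + `|p0 0 p| + 1.
have hs : 0 <= s by rewrite /s; have := normr_ge0 (p0 0 p); lra.
have h1 := HM _ (hP s hs).
have apE : a 0 p = (A i0 0 p)%:~R by rewrite /a mxE.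
have h2 := entry_le (p0 + s *: a) p; rewrite !mxE -apE in h2.
have h3 := ler_normD (p0 0 p + s * a 0 p) (- p0 0 p).
rewrite normrN addrAC subrr add0r normrM (ger0_norm hs) in h3.
have h4 : s <= s * `|a 0 p| by rewrite ler_peMr.
have h5 := le_trans h2 h1; clear h1 h2 HM hP hz hp0P Hno all_i0 Hp0 apE.
have hsd : s = M + `|p0 0 p| + 1 by [].
lra.
Qed.

Lemma set_split (S1 S2 S3 : set 'rV[int]_d) :
  (forall z, (S1 z <-> S2 z \/ S3 z) /\ ~ (S2 z /\ S3 z)) ->
  S1 = S2 `|` S3 /\ S2 `&` S3 = set0.
Proof.
move=> H; split.
  apply/seteqP; split => z hz; [exact: (H z).1.1 | exact: (H z).1.2].
apply/seteqP; split; last exact: sub0set.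
move=> z [h1 h2]; exact: (H z).2 (conj h1 h2).
Qed.

Lemma card_split (S1 S2 S3 : set 'rV[int]_d) : finite_set S1 ->
  S1 = S2 `|` S3 -> S2 `&` S3 = set0 ->
  #|` fset_set S1| = (#|` fset_set S2| + #|` fset_set S3|)%N.
Proof.
move=> f1 E D.
have f2 : finite_set S2 by apply: sub_finite_set f1; rewrite E; exact: subsetUl.
have f3 : finite_set S3 by apply: sub_finite_set f1; rewrite E; exact: subsetUr.
by rewrite E fset_setU // -cardfsUI -fset_setI // D fset_set0 cardfs0 addn0.
Qed.

Lemma main_sec : exists2 eps0 : R, 0 < eps0 & forall eps : R, 0 < eps < eps0 ->
    ((forall t : nat,
        (TL (polyhedron R A b) v t)%:Z - (TL (polyhedron R A b) (v + eps *: a) t)%:Z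
          = (TL Fset v t)%:Z)
     /\ (exists t : nat, TL Fset v t <> 0%N))
    /\ ((~ exists (j : 'I_m) (c : R), 0 < c /\ intv R (A j) = - (c *: a)) ->
        forall t : nat, TL (polyhedron R A b) v t = TL (polyhedron R A b) (v - eps *: a) t).
Proof.
have [e1 he1 H1] := @combine _ Good (enum 'I_m) (fun j _ => good_ex j).
have [e2 he2 H2] := T0_ex.
exists (Num.min e1 e2); first by rewrite lt_min he1 he2.
move=> eps /andP[h0]; rewrite lt_min => /andP[h1 h2].
have hg : forall j, Good j eps by move=> j; apply: H1; [rewrite h0 h1 | rewrite mem_enum].
have hT := H2 eps (introT andP (conj h0 h2)).
split; [split|].
- move=> t.
  have [E D] := set_split _ _ _ (fun z => part1_z t z eps h0 hg hT).
  rewrite /TL (card_split _ _ _ (memS_fin (polyhedron R A b) v t (@subset_refl _ _)) E D).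
  by rewrite PoszD addrAC subrr add0r.
- have [t [z hz]] := F_lattice; exists t.
  rewrite /TL => /eqP; rewrite cardfs_eq0 => /eqP h.
  have := fset_set_set0 (memS_fin Fset v t (@subIsetl _ _ _)) h.
  by move=> /seteqP [h' _]; exact: h' z hz.
- move=> Hno t; rewrite /TL; congr (#|` fset_set _|).
  apply/funext => z; apply/propext.
  exact: (part2_z t z eps h0 hg hT Hno (v_not_int Hno)).
Qed.
End Poly.



Theorem mainTheorem12 (R : realType) (d m : nat)
  (A : 'I_m -> 'rV[int]_d) (b : 'I_m -> int)
  (Hprim : forall i, primitive (A i) (b i))
  (Hirr : irredundant R A b)
  (Hbdd : bounded_set (polyhedron R A b))
  (Hfull : (polyhedron R A b)° !=set0)
  (i0 : 'I_m) (k : int) (v : 'rV[R]_d)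
  (Hv : hyperplane R (A i0) k v)
  (Hgen : forall (j : 'I_m) (k' : int),
      hyperplane R (A j) k' <> hyperplane R (A i0) k -> ~ hyperplane R (A j) k' v) :
  let P := polyhedron R A b in
  let F := P `&` hyperplane R (A i0) (b i0) in
  let a := intv R (A i0) in
  exists2 eps0 : R, 0 < eps0 & forall eps : R, 0 < eps < eps0 ->
    ((forall t : nat,
        (TL P v t)%:Z - (TL P (v + eps *: a) t)%:Z = (TL F v t)%:Z)
     /\ (exists t : nat, TL F v t <> 0%N))
    /\ ((~ exists (j : 'I_m) (c : R), 0 < c /\ intv R (A j) = - (c *: a)) ->
        forall t : nat, TL P v t = TL P (v - eps *: a) t).
Proof.
move=> P F a.
exact: (@main_sec R d m A b Hprim Hirr Hbdd Hfull i0 k v Hv Hgen).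
Qed.
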